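(* Let $\Lambda$ and $\Lambda_1$ be rings and let $T$ be a one-variable functor from left $\Lambda$-modules to $\Lambda_1$-modules. (i) Suppose $T$ is covariant, right exact, and of type $L\Sigma^{*}$ (i.e. commutes with direct limits), and suppose $T(\Lambda/I)=0$ for every finitely generated left ideal $I$ of $\Lambda$. Then $T=0$, i.e. $T(A)=0$ for every left $\Lambda$-module $A$. (ii) Suppose $T$ is contravariant, left exact, and of type $R\Sigma^{*}$ (i.e. commutes with inverse limits), and suppose $T(I)=0$ for every left ideal $I$ of $\Lambda$. Then $T=0$.
   Context: Direct systems $\{A^{\alpha},\varphi^{\alpha}_{\beta}\}$ and inverse systems $\{A_\alpha,\psi^\beta_\alpha\}$ are indexed by directed sets. For a direct system with direct limit $\varinjlim A^{\alpha}$ and canonical maps $\sigma^{\alpha}:A^{\alpha}\to\varinjlim A^{\gamma}$, a covariant functor $T$ gives a direct system $\{T(A^\alpha),T(\varphi^\alpha_\beta)\}$ and an induced canonical homomorphism $\widehat{\sigma}:\varinjlim T(A^{\alpha})\to T(\varinjlim A^{\alpha})$ determined by $\widehat\sigma\circ\sigma^\alpha_T=T(\sigma^\alpha)$ (where $\sigma^\alpha_T:T(A^\alpha)\to\varinjlim T(A^\gamma)$ is the canonical map); $T$ is of type $L\Sigma^{*}$ if $\widehat\sigma$ is an isomorphism for every direct system. For an inverse system with inverse limit $\varprojlim A_\alpha$ and canonical maps $\xi_\alpha:\varprojlim A_\gamma\to A_\alpha$, a functor $T$ is of type $R\Sigma^{*}$ if the canonical comparison map between $T(\varprojlim A_\alpha)$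 and the corresponding limit of the system $\{T(A_\alpha)\}$, induced by the maps $T(\xi_\alpha)$, is an isomorphism for every inverse system; for a contravariant functor this is the map with arrows reversed relative to the covariant case (the paper's convention). A covariant functor is right exact if it sends short exact sequences $0\to A'\to A\to A''\to 0$ to exact sequences $T(A')\to T(A)\to T(A'')\to 0$; a contravariant functor is left exact if it sends them to exact sequences $0\to T(A'')\to T(A)\to T(A')$. *)

(* Defs.v *)
From HB Require Import structures.
From mathcomp Require Import all_boot all_order all_algebra.
Set Implicit Arguments. Unset Strict Implicit. Unset Printing Implicit Defensive.
Import GRing.Theory.
Local Open Scope ring_scope.

(* Covariant functor from left R-modules to left R1-modules. Functoriality and
   additivity are stated pointwise (morphisms are functions). *)
Record CovFunctor (R R1 : pzRingType) := {
  cobj :> lmodType R -> lmodType R1;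
  cmap : forall A B : lmodType R, {linear A -> B} -> {linear cobj A -> cobj B};
  cmap_id : forall (A : lmodType R) (h : {linear A -> A}),
      (forall x, h x = x) -> forall y, cmap h y = y;
  cmap_comp : forall (A B C : lmodType R) (f : {linear A -> B})
      (g : {linear B -> C}) (h : {linear A -> C}),
      (forall x, h x = g (f x)) -> forall y, cmap h y = cmap g (cmap f y);
  cmap_add : forall (A B : lmodType R) (f g h : {linear A -> B}),
      (forall x, h x = f x + g x) -> forall y, cmap h y = cmap f y + cmap g y
}.

Record ContraFunctor (R R1 : pzRingType) := {
  kobj :> lmodType R -> lmodType R1;
  kmap : forall A B : lmodType R, {linear A -> B} -> {linear kobj B -> kobj A};
  kmap_id : forall (A : lmodType R) (h : {linear A -> A}),
      (forall x, h x = x) -> forall y, kmap h y = y;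
  kmap_comp : forall (A B C : lmodType R) (f : {linear A -> B})
      (g : {linear B -> C}) (h : {linear A -> C}),
      (forall x, h x = g (f x)) -> forall y, kmap h y = kmap f (kmap g y);
  kmap_add : forall (A B : lmodType R) (f g h : {linear A -> B}),
      (forall x, h x = f x + g x) -> forall y, kmap h y = kmap f y + kmap g y
}.

Definition exact_at (R : pzRingType) (A B C : lmodType R)
  (f : A -> B) (g : B -> C) : Prop :=
  forall y : B, g y = 0 <-> exists x : A, y = f x.

Definition short_exact (R : pzRingType) (A' A A'' : lmodType R)
  (f : A' -> A) (g : A -> A'') : Prop :=
  injective f /\ exact_at f g /\ (forall z : A'', exists y : A, g y = z).

Definition right_exact (R R1 : pzRingType) (T : CovFunctor R R1) : Prop :=
  forall (A' A A'' : lmodType R) (f : {linear A' -> A}) (g : {linear A -> A''}),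
    short_exact f g ->
    exact_at (cmap T f) (cmap T g) /\ (forall z : T A'', exists y, cmap T g y = z).

Definition left_exact (R R1 : pzRingType) (T : ContraFunctor R R1) : Prop :=
  forall (A' A A'' : lmodType R) (f : {linear A' -> A}) (g : {linear A -> A''}),
    short_exact f g ->
    injective (kmap T g) /\ exact_at (kmap T g) (kmap T f).

Definition directed (I : Type) (le : I -> I -> Prop) : Prop :=
  inhabited I /\ (forall a, le a a) /\ (forall a b c, le a b -> le b c -> le a c)
  /\ (forall a b, exists c, le a c /\ le b c).

Definition direct_system (R : pzRingType) (I : Type) (le : I -> I -> Prop)
  (A : I -> lmodType R) (phi : forall a b, le a b -> {linear A a -> A b}) : Prop :=
  (forall a (h : le a a) x, phi a a h x = x) /\
  (forall a b c (hab : le a b) (hbc : le b c) (hac : le a c) x,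
      phi a c hac x = phi b c hbc (phi a b hab x)).

Definition is_direct_limit (R : pzRingType) (I : Type) (le : I -> I -> Prop)
  (A : I -> lmodType R) (phi : forall a b, le a b -> {linear A a -> A b})
  (L : lmodType R) (sigma : forall a, {linear A a -> L}) : Prop :=
  (forall a b (h : le a b) x, sigma b (phi a b h x) = sigma a x) /\
  (forall (M : lmodType R) (tau : forall a, {linear A a -> M}),
     (forall a b (h : le a b) x, tau b (phi a b h x) = tau a x) ->
     (exists u : {linear L -> M}, forall a x, u (sigma a x) = tau a x) /\
     (forall u v : {linear L -> M},
        (forall a x, u (sigma a x) = tau a x) ->
        (forall a x, v (sigma a x) = tau a x) -> forall y, u y = v y)).

Definition inverse_system (R : pzRingType) (I : Type) (le : I -> I -> Prop)
  (A : I -> lmodType R) (psi : forall a b, le a b -> {linear A b -> A a}) : Prop :=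
  (forall a (h : le a a) x, psi a a h x = x) /\
  (forall a b c (hab : le a b) (hbc : le b c) (hac : le a c) x,
      psi a c hac x = psi a b hab (psi b c hbc x)).

Definition is_inverse_limit (R : pzRingType) (I : Type) (le : I -> I -> Prop)
  (A : I -> lmodType R) (psi : forall a b, le a b -> {linear A b -> A a})
  (L : lmodType R) (xi : forall a, {linear L -> A a}) : Prop :=
  (forall a b (h : le a b) x, psi a b h (xi b x) = xi a x) /\
  (forall (M : lmodType R) (tau : forall a, {linear M -> A a}),
     (forall a b (h : le a b) x, psi a b h (tau b x) = tau a x) ->
     (exists u : {linear M -> L}, forall a x, xi a (u x) = tau a x) /\
     (forall u v : {linear M -> L},
        (forall a x, xi a (u x) = tau a x) ->
        (forall a x, xi a (v x) = tau a x) -> forall y, u y = v y)).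

(* Type L Sigma^* : the canonical map lim T(A^a) -> T(lim A^a) is an
   isomorphism, i.e. (T(lim A^a), T(sigma^a)) is a direct limit of the
   system {T(A^a), T(phi^a_b)}. *)
Definition type_LSigma (R R1 : pzRingType) (T : CovFunctor R R1) : Prop :=
  forall (I : Type) (le : I -> I -> Prop) (A : I -> lmodType R)
    (phi : forall a b, le a b -> {linear A a -> A b})
    (L : lmodType R) (sigma : forall a, {linear A a -> L}),
    directed le -> direct_system phi -> is_direct_limit phi sigma ->
    is_direct_limit (A := fun a => T (A a)) (fun a b h => cmap T (phi a b h))
                    (L := T L) (fun a => cmap T (sigma a)).

(* Type R Sigma^* for a contravariant functor: the canonical map
   lim_-> T(A_a) -> T(lim_<- A_a) induced by the T(xi_a) is an isomorphism,
   i.e. (T(lim A_a), T(xi_a)) is a direct limit of {T(A_a), T(psi^b_a)}. *)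
Definition type_RSigma (R R1 : pzRingType) (T : ContraFunctor R R1) : Prop :=
  forall (I : Type) (le : I -> I -> Prop) (A : I -> lmodType R)
    (psi : forall a b, le a b -> {linear A b -> A a})
    (L : lmodType R) (xi : forall a, {linear L -> A a}),
    directed le -> inverse_system psi -> is_inverse_limit psi xi ->
    is_direct_limit (A := fun a => T (A a)) (fun a b h => kmap T (psi a b h))
                    (L := T L) (fun a => kmap T (xi a)).

Definition left_ideal (R : pzRingType) (I : R -> Prop) : Prop :=
  I 0 /\ (forall x y, I x -> I y -> I (x + y)) /\ (forall r x, I x -> I (r * x)).

Definition fg_left_ideal (R : pzRingType) (I : R -> Prop) : Prop :=
  left_ideal I /\
  exists (n : nat) (g : 'I_n -> R),
    forall x, I x <-> exists c : 'I_n -> R, x = \sum_(i < n) c i * g i.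

(* Q is (a model of) the cyclic module Lambda/I: there is a surjective
   Lambda-linear map Lambda -> Q with kernel I. *)
Definition is_quotient_by (R : pzRingType) (I : R -> Prop) (Q : lmodType R)
  (p : {linear R^o -> Q}) : Prop :=
  (forall z : Q, exists r : R^o, p r = z) /\ (forall r : R^o, p r = 0 <-> I r).

(* M is (a model of) the left ideal I viewed as a left module: there is an
   injective Lambda-linear map M -> Lambda with image I. *)
Definition is_ideal_module (R : pzRingType) (I : R -> Prop) (M : lmodType R)
  (j : {linear M -> R^o}) : Prop :=
  injective j /\ (forall r : R^o, I r <-> exists m : M, j m = r).

(* Main.v *)
Require Import Defs.
From HB Require Import structures.
From mathcomp Require Import all_boot all_order all_algebra.
From mathcomp Require Import boolp.
Set Implicit Arguments. Unset Strict Implicit. Unset Printing Implicit Defensive.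
Import GRing.Theory.
Local Open Scope ring_scope.

Definition mkLin (R : pzRingType) (U V : lmodType R) (f : U -> V)
  (H : forall a x y, f (a *: x + y) = a *: f x + f y) : {linear U -> V} :=
  HB.pack_for {linear U -> V} f (GRing.isLinear.Build R U V *:%R f H).

Lemma mkLinE R U V f H x : @mkLin R U V f H x = f x. Proof. by []. Qed.

Record sclosed (R : pzRingType) (V : lmodType R) := SClosed {
  spred : V -> Prop; spred0 : spred 0;
  spredD : forall a x y, spred x -> spred y -> spred (a *: x + y) }.

Record subm (R : pzRingType) (V : lmodType R) (S : sclosed V) := SubM {
  smv : V; sprop : spred S smv }.

HB.instance Definition _ (R : pzRingType) (V : lmodType R) (S : sclosed V) := gen_eqMixin (@subm R V S).
HB.instance Definition _ (R : pzRingType) (V : lmodType R) (S : sclosed V) := gen_choiceMixin (@subm R V S).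

Lemma subm_inj (R : pzRingType) (V : lmodType R) (S : sclosed V) (x y : @subm R V S) : smv x = smv y -> x = y.
Proof. case: x y => [x px] [y py] /= exy; subst y; congr SubM; exact: Prop_irrelevance. Qed.


Lemma spredN (R : pzRingType) (V : lmodType R) (S : sclosed V) (x : V) : @spred R V S x -> spred S (- x).
Proof. move=> px. have := spredD (-1) px (spred0 S). by rewrite addr0 scaleN1r. Qed.
Lemma spredA (R : pzRingType) (V : lmodType R) (S : sclosed V) (x y : V) : @spred R V S x -> spred S y -> spred S (x + y).
Proof. move=> px py. have := spredD 1 px py. by rewrite scale1r. Qed.
Lemma spredZ (R : pzRingType) (V : lmodType R) (S : sclosed V) a (x : V) : @spred R V S x -> spred S (a *: x).
Proof. move=> px. have := spredD a px (spred0 S). by rewrite addr0. Qed.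

Definition sm_zero (R : pzRingType) (V : lmodType R) (S : sclosed V) : @subm R V S := SubM (spred0 S).
Definition sm_add (R : pzRingType) (V : lmodType R) (S : sclosed V) (x y : @subm R V S) : subm S := SubM (spredA (sprop x) (sprop y)).
Definition sm_opp (R : pzRingType) (V : lmodType R) (S : sclosed V) (x : @subm R V S) : subm S := SubM (spredN (sprop x)).
Definition sm_scale (R : pzRingType) (V : lmodType R) (S : sclosed V) a (x : @subm R V S) : subm S := SubM (spredZ a (sprop x)).

Lemma sm_addA (R : pzRingType) (V : lmodType R) (S : sclosed V) : associative (@sm_add R V S).
Proof. by move=> x y z; apply: subm_inj; rewrite /= addrA. Qed.
Lemma sm_addC (R : pzRingType) (V : lmodType R) (S : sclosed V) : commutative (@sm_add R V S).
Proof. by move=> x y; apply: subm_inj; rewrite /= addrC. Qed.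
Lemma sm_add0 (R : pzRingType) (V : lmodType R) (S : sclosed V) : left_id (@sm_zero R V S) (@sm_add R V S).
Proof. by move=> x; apply: subm_inj; rewrite /= add0r. Qed.
Lemma sm_addN (R : pzRingType) (V : lmodType R) (S : sclosed V) : left_inverse (@sm_zero R V S) (@sm_opp R V S) (@sm_add R V S).
Proof. by move=> x; apply: subm_inj; rewrite /= addNr. Qed.

HB.instance Definition _ (R : pzRingType) (V : lmodType R) (S : sclosed V) := GRing.isZmodule.Build (@subm R V S)
  (@sm_addA R V S) (@sm_addC R V S) (@sm_add0 R V S) (@sm_addN R V S).

Lemma sm_scaleA (R : pzRingType) (V : lmodType R) (S : sclosed V) a b (v : @subm R V S) : sm_scale a (sm_scale b v) = sm_scale (a * b) v.
Proof. by apply: subm_inj; rewrite /= scalerA. Qed.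
Lemma sm_scale1 (R : pzRingType) (V : lmodType R) (S : sclosed V) : left_id 1 (@sm_scale R V S).
Proof. by move=> x; apply: subm_inj; rewrite /= scale1r. Qed.
Lemma sm_scaleDr (R : pzRingType) (V : lmodType R) (S : sclosed V) : right_distributive (@sm_scale R V S) +%R.
Proof. by move=> a x y; apply: subm_inj; rewrite /= scalerDr. Qed.
Lemma sm_scaleDl (R : pzRingType) (V : lmodType R) (S : sclosed V) (v : @subm R V S) : {morph (@sm_scale R V S)^~ v: a b / a + b}.
Proof. by move=> a b; apply: subm_inj; rewrite /= scalerDl. Qed.

HB.instance Definition _ (R : pzRingType) (V : lmodType R) (S : sclosed V) := GRing.Zmodule_isLmodule.Build R (@subm R V S)
  (@sm_scaleA R V S) (@sm_scale1 R V S) (@sm_scaleDr R V S) (@sm_scaleDl R V S).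

Lemma smvD (R : pzRingType) (V : lmodType R) (S : sclosed V) (x y : @subm R V S) : smv (x + y) = smv x + smv y. Proof. by []. Qed.
Lemma smvZ (R : pzRingType) (V : lmodType R) (S : sclosed V) a (x : @subm R V S) : smv (a *: x) = a *: smv x. Proof. by []. Qed.
Lemma smv0 (R : pzRingType) (V : lmodType R) (S : sclosed V) : smv (0 : @subm R V S) = 0. Proof. by []. Qed.

Definition smvL (R : pzRingType) (V : lmodType R) (S : sclosed V) : {linear @subm R V S -> V} := @mkLin R _ _ (@smv R V S) (fun a x y => erefl).

Definition fsp (A : Type) (R : pzRingType) := A -> R.
HB.instance Definition _ (A : Type) (R : pzRingType) := gen_eqMixin (fsp A R).
HB.instance Definition _ (A : Type) (R : pzRingType) := gen_choiceMixin (fsp A R).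
Definition fz (A : Type) (R : pzRingType) : fsp A R := fun _ => 0.
Definition fadd (A : Type) (R : pzRingType) (f g : fsp A R) : fsp (A : Type) (R : pzRingType) := fun a => f a + g a.
Definition fopp (A : Type) (R : pzRingType) (f : fsp A R) : fsp (A : Type) (R : pzRingType) := fun a => - f a.
Definition fscale (A : Type) (R : pzRingType) (r : R) (f : fsp A R) : fsp (A : Type) (R : pzRingType) := fun a => r * f a.
Lemma faddA (A : Type) (R : pzRingType) : associative (@fadd A R).
Proof. by move=> x y z; apply: funext => a; rewrite /fadd addrA. Qed.
Lemma faddC (A : Type) (R : pzRingType) : commutative (@fadd A R).
Proof. by move=> x y; apply: funext => a; rewrite /fadd addrC. Qed.
Lemma fadd0 (A : Type) (R : pzRingType) : left_id (@fz A R) (@fadd A R).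
Proof. by move=> x; apply: funext => a; rewrite /fadd /fz add0r. Qed.
Lemma faddN (A : Type) (R : pzRingType) : left_inverse (@fz A R) (@fopp A R) (@fadd A R).
Proof. by move=> x; apply: funext => a; rewrite /fadd /fz /fopp addNr. Qed.
HB.instance Definition _ (A : Type) (R : pzRingType) := GRing.isZmodule.Build (fsp A R)
  (@faddA A R) (@faddC A R) (@fadd0 A R) (@faddN A R).
Lemma fscaleA (A : Type) (R : pzRingType) a b (v : fsp A R) : fscale a (fscale b v) = fscale (a * b) v.
Proof. by apply: funext => x; rewrite /fscale mulrA. Qed.
Lemma fscale1 (A : Type) (R : pzRingType) : left_id 1 (@fscale A R).
Proof. by move=> v; apply: funext => x; rewrite /fscale mul1r. Qed.
Lemma fscaleDr (A : Type) (R : pzRingType) : right_distributive (@fscale A R) +%R.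
Proof. by move=> a u v; apply: funext => x; rewrite /fscale /= /fadd mulrDr. Qed.
Lemma fscaleDl (A : Type) (R : pzRingType) (v : fsp A R) : {morph (@fscale A R)^~ v: a b / a + b}.
Proof. by move=> a b; apply: funext => x; rewrite /fscale /= /fadd mulrDl. Qed.
HB.instance Definition _ (A : Type) (R : pzRingType) := GRing.Zmodule_isLmodule.Build R (fsp A R)
  (@fscaleA A R) (@fscale1 A R) (@fscaleDr A R) (@fscaleDl A R).

Lemma fspD (A : Type) (R : pzRingType) (f g : fsp A R) a : (f + g) a = f a + g a. Proof. by []. Qed.
Lemma fspZ (A : Type) (R : pzRingType) r (f : fsp A R) a : (r *: f) a = r * f a. Proof. by []. Qed.
Lemma fsp0 (A : Type) (R : pzRingType) a : (0 : fsp A R) a = 0. Proof. by []. Qed.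
Lemma fspN (A : Type) (R : pzRingType) (f : fsp A R) a : (- f) a = - f a. Proof. by []. Qed.
Definition idL (R : pzRingType) (U : lmodType R) : {linear U -> U} :=
  @mkLin R U U (fun x => x) (fun a x y => erefl).
Definition zeroL (R : pzRingType) (U V : lmodType R) : {linear U -> V} :=
  @mkLin R U V (fun _ => 0) (fun a x y => ltac:(by rewrite /= scaler0 addr0)).
Definition compL (R : pzRingType) (U V W : lmodType R) (f : {linear U -> V})
  (g : {linear V -> W}) : {linear U -> W} :=
  @mkLin R U W (fun x => g (f x)) (fun a x y => ltac:(by rewrite /= !linearP)).


Lemma cmap_ext (R R1 : pzRingType) (T : CovFunctor R R1) (U V : lmodType R)
  (f g : {linear U -> V}) : (forall x, f x = g x) -> forall y, cmap T f y = cmap T g y.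
Proof.
move=> fg y; rewrite (cmap_comp (f := idL U) (g := g) (h := f)) //.
by rewrite (cmap_id (h := idL U)).
Qed.

Lemma kmap_ext (R R1 : pzRingType) (T : ContraFunctor R R1) (U V : lmodType R)
  (f g : {linear U -> V}) : (forall x, f x = g x) -> forall y, kmap T f y = kmap T g y.
Proof.
move=> fg y; rewrite (kmap_comp (f := idL U) (g := g) (h := f)) //.
by rewrite (kmap_id (h := idL U)).
Qed.

Lemma cmap_zero (R R1 : pzRingType) (T : CovFunctor R R1) (U V : lmodType R)
  (f : {linear U -> V}) : (forall x, f x = 0) -> forall y, cmap T f y = 0.
Proof.
move=> f0 y; have := @cmap_add _ _ T _ _ f f f _ y.
move=> /(_ (fun x => ltac:(by rewrite f0 addr0))) H.
by have := congr1 (fun w => w - cmap T f y) H; rewrite subrr addrK.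
Qed.

Lemma kmap_zero (R R1 : pzRingType) (T : ContraFunctor R R1) (U V : lmodType R)
  (f : {linear U -> V}) : (forall x, f x = 0) -> forall y, kmap T f y = 0.
Proof.
move=> f0 y; have := @kmap_add _ _ T _ _ f f f _ y.
move=> /(_ (fun x => ltac:(by rewrite f0 addr0))) H.
by have := congr1 (fun w => w - kmap T f y) H; rewrite subrr addrK.
Qed.

Lemma cov_kill (R R1 : pzRingType) (I : Type) (T : CovFunctor R R1) (X : lmodType R)
  (TL : forall y : T R^o, y = 0) (q : seq I -> {linear X -> X})
  (d : I -> {linear R^o -> X}) (e : I -> seq I -> {linear X -> R^o})
  (q0 : forall x, q [::] x = 0)
  (qS : forall a t x, q (a :: t) x = q t x + d a (e a t x)) :
  forall t y, cmap T (q t) y = 0.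
Proof.
elim=> [|a t IH] y; first exact: cmap_zero.
rewrite (cmap_add (f := q t) (g := compL (e a t) (d a))) ?IH ?add0r; last exact: qS.
rewrite (cmap_comp (f := e a t) (g := d a)) //.
by rewrite (TL (cmap T (e a t) y)) linear0.
Qed.

Lemma contra_kill (R R1 : pzRingType) (I : Type) (T : ContraFunctor R R1) (X : lmodType R)
  (TL : forall y : T R^o, y = 0) (q : seq I -> {linear X -> X})
  (d : I -> {linear R^o -> X}) (e : I -> seq I -> {linear X -> R^o})
  (q0 : forall x, q [::] x = 0)
  (qS : forall a t x, q (a :: t) x = q t x + d a (e a t x)) :
  forall t y, kmap T (q t) y = 0.
Proof.
elim=> [|a t IH] y; first exact: kmap_zero.
rewrite (kmap_add (f := q t) (g := compL (e a t) (d a))) ?IH ?add0r; last exact: qS.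
rewrite (kmap_comp (f := e a t) (g := d a)) //.
by rewrite (TL (kmap T (d a) y)) linear0.
Qed.

Lemma dlim_zero (R : pzRingType) (I : Type) (le : I -> I -> Prop) (B : I -> lmodType R)
  (phi : forall a b, le a b -> {linear B a -> B b}) (L : lmodType R)
  (sigma : forall a, {linear B a -> L}) :
  is_direct_limit phi sigma -> (forall a (z : B a), z = 0) -> forall y : L, y = 0.
Proof.
move=> [comp univ] B0 y.
have [_ uniq] := univ L sigma comp.
have := uniq (idL L) (zeroL L L) (fun a x => erefl) _ y; apply.
by move=> a x; rewrite (B0 a x) linear0.
Qed.
Definition fsupp (R : pzRingType) (A : eqType) : sclosed (fsp A R).
Proof.
refine (@SClosed R (fsp A R) (fun f => exists s : seq A, forall a, a \notin s -> f a = 0) _ _).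
  by exists [::].
move=> r x y [s hs] [t ht]; exists (s ++ t) => a; rewrite mem_cat negb_or => /andP[ha hb].
by rewrite fspD fspZ hs // ht // mulr0 addr0.
Defined.

Definition F (R : pzRingType) (A : eqType) := subm (fsupp R A).

Definition fsC (R : pzRingType) (A : eqType) (s : seq A) : sclosed (F R A).
Proof.
refine (@SClosed R (F R A) (fun x => forall a, a \notin s -> smv x a = 0) _ _) => //.
by move=> r x y hx hy a ha; rewrite /= fspD fspZ hx // hy // mulr0 addr0.
Defined.
Definition Fs (R : pzRingType) (A : eqType) (s : seq A) := subm (fsC R s).

Definition fwC (R : pzRingType) (A : eqType) (s : seq A) : sclosed (F R A).
Proof.
refine (@SClosed R (F R A) (fun x => forall a, a \in s -> smv x a = 0) _ _) => //.
by move=> r x y hx hy a ha; rewrite /= fspD fspZ hx // hy // mulr0 addr0.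
Defined.
Definition Ws (R : pzRingType) (A : eqType) (s : seq A) := subm (fwC R s).

Definition sle (A : eqType) (s t : seq A) : Prop := {subset s <= t}.

Lemma sle_directed (A : eqType) : directed (@sle A).
Proof.
split; first by constructor; exact [::].
split; first by move=> a x.
split; first by move=> a b c hab hbc x /hab /hbc.
by move=> a b; exists (a ++ b); split => x hx; rewrite mem_cat hx ?orbT.
Qed.

Lemma phiF_ok (R : pzRingType) (A : eqType) (s t : seq A) (h : sle s t) (x : Fs R s) :
  spred (fsC R t) (smv x).
Proof. by move=> a ha; apply: (sprop x); apply: contra ha; apply: h. Qed.

Definition phiF (R : pzRingType) (A : eqType) (s t : seq A) (h : sle s t) :
  {linear Fs R s -> Fs R t} :=
  @mkLin R _ _ (fun x => @SubM _ _ (fsC R t) (smv x) (phiF_ok h x))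
    (fun a x y => ltac:(by apply: subm_inj)).

Definition sigF (R : pzRingType) (A : eqType) (s : seq A) : {linear Fs R s -> F R A} :=
  smvL (fsC R s).

Lemma phiF_sys (R : pzRingType) (A : eqType) : direct_system (@phiF R A).
Proof. by split => *; apply: subm_inj. Qed.

Lemma F_cover (R : pzRingType) (A : eqType) (x : F R A) :
  exists s : seq A, forall a, a \notin s -> smv x a = 0.
Proof. exact: (sprop x). Qed.

Definition restr (R : pzRingType) (A : eqType) (s : seq A) (x : F R A)
  (h : forall a, a \notin s -> smv x a = 0) : Fs R s := @SubM _ _ (fsC R s) x h.

Lemma F_dlim (R : pzRingType) (A : eqType) : is_direct_limit (@phiF R A) (@sigF R A).
Proof.
split; first by [].
move=> M tau comp.
have W : forall x s t hs ht, tau s (@restr R A s x hs) = tau t (@restr R A t x ht).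
  move=> x s t hs ht.
  have hst : sle s (s ++ t) by move=> z hz; rewrite mem_cat hz.
  have hts : sle t (s ++ t) by move=> z hz; rewrite mem_cat hz orbT.
  rewrite -(comp _ _ hst) -(comp _ _ hts); congr (tau _ _); exact: subm_inj.
pose u0 (x : F R A) := tau _ (@restr R A _ x (projT2 (cid (F_cover x)))).
have u0E : forall x s hs, u0 x = tau s (@restr R A s x hs) by move=> x s hs; apply: W.
split.
  have ulin : forall a x y, u0 (a *: x + y) = a *: u0 x + u0 y.
    move=> a x y.
    have [s hs] := F_cover x; have [t ht] := F_cover y.
    have hx : forall b, b \notin s ++ t -> smv x b = 0.
      by move=> b; rewrite mem_cat negb_or => /andP[/hs].
    have hy : forall b, b \notin s ++ t -> smv y b = 0.
      by move=> b; rewrite mem_cat negb_or => /andP[_ /ht].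
    have hxy : forall b, b \notin s ++ t -> smv (a *: x + y) b = 0.
      by move=> b hb; rewrite /= fspD fspZ hx // hy // mulr0 addr0.
    rewrite (u0E _ _ hxy) (u0E _ _ hx) (u0E _ _ hy) -linearP; congr (tau _ _).
    exact: subm_inj.
  exists (@mkLin R _ _ u0 ulin) => s x /=.
  rewrite (u0E _ s (sprop x)); congr (tau _ _); exact: subm_inj.
move=> u v hu hv y.
have [s hs] := F_cover y.
have -> : y = @sigF R A s (restr hs) by apply: subm_inj.
by rewrite hu hv.
Qed.
Lemma sum_undup_sub (A : eqType) (V : zmodType) (h : A -> V) (s t : seq A) :
  {subset s <= t} -> (forall a, a \notin s -> h a = 0) ->
  \sum_(a <- undup t) h a = \sum_(a <- undup s) h a.
Proof.
move=> st h0.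
rewrite (bigID (fun a => a \in s)) /= [X in _ + X]big1 ?addr0; last first.
  by move=> a /h0.
rewrite -big_filter; apply: perm_big; apply: uniq_perm.
- by rewrite filter_uniq // undup_uniq.
- exact: undup_uniq.
move=> a; rewrite mem_filter !mem_undup; case: (boolP (a \in s)) => //= /st -> //.
Qed.

Definition tauG (R : pzRingType) (A : lmodType R) (s : seq A) : {linear Fs R s -> A}.
Proof.
refine (@mkLin R _ _ (fun x : Fs R s => \sum_(a <- undup s) smv (smv x) a *: a) _).
move=> r x y /=.
rewrite scaler_sumr -big_split /=; apply: eq_bigr => a _.
by rewrite fspD fspZ scalerDl scalerA.
Defined.

Lemma gex (R : pzRingType) (A : lmodType R) :
  exists g : {linear F R A -> A}, forall a : A, exists x, g x = a.
Proof.
have [_ univ] := @F_dlim R A.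
have comp : forall (s t : seq A) (h : sle s t) (x : Fs R s), tauG t (phiF R h x) = tauG s x.
  move=> s t h x /=.
  apply: sum_undup_sub; first exact: h.
  by move=> a ha; rewrite (sprop x a ha) scale0r.
have [[u hu] _] := univ A (@tauG R A) comp.
exists u => a.
pose d : fsp A R := fun b => if b == a then 1 else 0.
have hd : spred (fsupp R A) d.
  by exists [:: a] => b; rewrite inE /d => /negPf ->.
have hz : spred (fsC R [:: a]) (SubM hd).
  by move=> b; rewrite inE /= /d => /negPf ->.
exists (@sigF R A _ (SubM hz)); rewrite hu /= big_cons big_nil addr0 /d eqxx scale1r //.
Qed.
Lemma F_ext (R : pzRingType) (A : eqType) (x y : F R A) :
  (forall b, smv x b = smv y b) -> x = y.
Proof. by move=> h; apply: subm_inj; apply: funext. Qed.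

Lemma Fs_ext (R : pzRingType) (A : eqType) (s : seq A) (x y : Fs R s) :
  (forall b, smv (smv x) b = smv (smv y) b) -> x = y.
Proof. by move=> h; apply: subm_inj; apply: F_ext. Qed.

Lemma Ws_ext (R : pzRingType) (A : eqType) (s : seq A) (x y : Ws R s) :
  (forall b, smv (smv x) b = smv (smv y) b) -> x = y.
Proof. by move=> h; apply: subm_inj; apply: F_ext. Qed.

Definition mkF0 (R : pzRingType) (A : eqType) (f : fsp A R) (s : seq A)
  (h : forall b, b \notin s -> f b = 0) : F R A := @SubM _ _ (fsupp R A) f (ex_intro _ s h).

Definition mkF (R : pzRingType) (A : eqType) (f : fsp A R) (s : seq A)
  (h : forall b, b \notin s -> f b = 0) : Fs R s :=
  @SubM _ _ (fsC R s) (mkF0 h) h.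

Lemma qF_ok (R : pzRingType) (A : eqType) (t : seq A) (x : F R A) :
  forall b, b \notin t -> (fun b => if b \in t then smv x b else 0) b = 0.
Proof. by move=> b /negPf ->. Qed.
Definition qF (R : pzRingType) (A : eqType) (t : seq A) : {linear F R A -> F R A} :=
  @mkLin R _ _ (fun x : F R A => mkF0 (@qF_ok R A t x))
    (fun a x y => ltac:(by apply: F_ext => b /=; rewrite /mkF0 /= !fspD !fspZ; case: ifP; rewrite ?mulr0 ?addr0)).

Lemma dF_ok (R : pzRingType) (A : eqType) (a : A) (r : R) :
  forall b, b \notin [:: a] -> (fun b => if b == a then r else 0) b = 0.
Proof. by move=> b; rewrite inE => /negPf ->. Qed.
Definition dF (R : pzRingType) (A : eqType) (a : A) : {linear R^o -> F R A} :=
  @mkLin R _ _ (fun r : R^o => mkF0 (@dF_ok R A a r))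
    (fun c x y => ltac:(by apply: F_ext => b /=; rewrite /mkF0 /= !fspD !fspZ; case: ifP; rewrite ?mulr0 ?addr0)).

Definition eF (R : pzRingType) (A : eqType) (a : A) (t : seq A) : {linear F R A -> R^o} :=
  @mkLin R (F R A) R^o (fun x : F R A => if a \in t then 0 else smv x a)
    (fun c x y => ltac:(by rewrite /=; case: ifP => _; rewrite ?scaler0 ?addr0)).

Lemma qF0 (R : pzRingType) (A : eqType) (x : F R A) : @qF R A [::] x = 0.
Proof. by apply: F_ext. Qed.

Lemma qFS (R : pzRingType) (A : eqType) (a : A) (t : seq A) (x : F R A) :
  @qF R A (a :: t) x = @qF R A t x + @dF R A a (@eF R A a t x).
Proof.
apply: F_ext => b /=; rewrite /mkF0 /= fspD /= inE.
case: (eqVneq b a) => [->|nba] /=; last by rewrite addr0.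
by case: ifP; rewrite ?add0r ?addr0.
Qed.

Lemma pF_ok (R : pzRingType) (A : eqType) (t : seq A) (x : F R A) :
  spred (fsupp R A) (fun b => if b \in t then 0 else smv x b).
Proof.
case: (sprop x) => s hs; exists s => b hb; rewrite hs //; by case: ifP.
Qed.
Definition pF (R : pzRingType) (A : eqType) (t : seq A) : {linear F R A -> F R A} :=
  @mkLin R _ _ (fun x : F R A => SubM (@pF_ok R A t x))
    (fun a x y => ltac:(by apply: F_ext => b /=; rewrite !fspD !fspZ; case: ifP; rewrite ?mulr0 ?addr0)).

Lemma rW_ok (R : pzRingType) (A : eqType) (t : seq A) (x : F R A) :
  spred (fwC R t) (pF R t x).
Proof. by move=> b hb /=; rewrite hb. Qed.
Definition rW (R : pzRingType) (A : eqType) (t : seq A) : {linear F R A -> Ws R t} :=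
  @mkLin R _ _ (fun x : F R A => SubM (@rW_ok R A t x))
    (fun a x y => ltac:(by apply: Ws_ext => b /=; rewrite !fspD !fspZ; case: ifP; rewrite ?mulr0 ?addr0)).

Lemma qFs_ok (R : pzRingType) (A : eqType) (s t : seq A) (x : Fs R s) :
  forall b, b \notin s -> (fun b => if b \in t then smv (smv x) b else 0) b = 0.
Proof. by move=> b hb /=; rewrite (sprop x b hb); case: ifP. Qed.
Definition qFs (R : pzRingType) (A : eqType) (s t : seq A) : {linear Fs R s -> Fs R s} :=
  @mkLin R _ _ (fun x : Fs R s => mkF (@qFs_ok R A s t x))
    (fun a x y => ltac:(by apply: Fs_ext => b /=; rewrite /mkF0 /= !fspD !fspZ; case: ifP; rewrite ?mulr0 ?addr0)).

Lemma dFs_ok (R : pzRingType) (A : eqType) (s : seq A) (a : A) (r : R) :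
  forall b, b \notin s -> (fun b => if (b == a) && (a \in s) then r else 0) b = 0.
Proof. by move=> b hb /=; case: (eqVneq b a) => [eba|] //=; rewrite -eba (negPf hb). Qed.
Definition dFs (R : pzRingType) (A : eqType) (s : seq A) (a : A) : {linear R^o -> Fs R s} :=
  @mkLin R _ _ (fun r : R^o => mkF (@dFs_ok R A s a r))
    (fun c x y => ltac:(by apply: Fs_ext => b /=; rewrite /mkF0 /= !fspD !fspZ; case: ifP; rewrite ?mulr0 ?addr0)).

Definition eFs (R : pzRingType) (A : eqType) (s : seq A) (a : A) (t : seq A) : {linear Fs R s -> R^o} :=
  @mkLin R (Fs R s) R^o (fun x : Fs R s => if a \in t then 0 else smv (smv x) a)
    (fun c x y => ltac:(by rewrite /=; case: ifP => _; rewrite ?scaler0 ?addr0)).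

Lemma qFs0 (R : pzRingType) (A : eqType) (s : seq A) (x : Fs R s) : @qFs R A s [::] x = 0.
Proof. by apply: Fs_ext. Qed.

Lemma qFsS (R : pzRingType) (A : eqType) (s : seq A) (a : A) (t : seq A) (x : Fs R s) :
  @qFs R A s (a :: t) x = @qFs R A s t x + @dFs R A s a (@eFs R A s a t x).
Proof.
apply: Fs_ext => b /=; rewrite /mkF0 /= fspD /= inE.
case: (eqVneq b a) => [->|nba] /=; last by rewrite addr0.
case: (boolP (a \in s)) => [as_|nas].
  by case: ifP; rewrite ?add0r ?addr0.
by rewrite (sprop x a nas); case: ifP; rewrite ?add0r ?addr0.
Qed.

Lemma qFs_id (R : pzRingType) (A : eqType) (s : seq A) (x : Fs R s) : @qFs R A s s x = x.
Proof.
apply: Fs_ext => b /=; case: (boolP (b \in s)) => // hb.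
by rewrite (sprop x b hb).
Qed.
Definition kerC (R : pzRingType) (U V : lmodType R) (g : {linear U -> V}) : sclosed U.
Proof.
refine (@SClosed R U (fun x => g x = 0) _ _); first exact: linear0.
by move=> a x y hx hy; rewrite linearP hx hy scaler0 addr0.
Defined.

Lemma ses_ker (R : pzRingType) (U V : lmodType R) (g : {linear U -> V}) :
  (forall z, exists y, g y = z) -> short_exact (smvL (kerC g)) g.
Proof.
move=> gs; split; first by move=> x y /= /subm_inj.
split=> // y; split => [gy|[x ->]]; last exact: (sprop x).
by exists (@SubM _ _ (kerC g) y gy).
Qed.

Lemma TFs_zero (R R1 : pzRingType) (A : eqType) (T : CovFunctor R R1)
  (TL : forall y : T R^o, y = 0) (s : seq A) (y : T (Fs R s)) : y = 0.
Proof.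
rewrite -(cmap_id (h := idL _) _ y) // (cmap_ext (g := @qFs R A s s)); last first.
  by move=> x; rewrite qFs_id.
exact: (cov_kill (d := @dFs R A s) (e := @eFs R A s) TL (@qFs0 R A s) (@qFsS R A s)).
Qed.

Lemma part1 (Lambda Lambda1 : pzRingType) (T : CovFunctor Lambda Lambda1) :
     right_exact T -> type_LSigma T ->
     (forall (I : Lambda -> Prop), fg_left_ideal I ->
        forall (Q : lmodType Lambda) (p : {linear Lambda^o -> Q}),
          is_quotient_by I p -> forall y : T Q, y = 0%R) ->
     forall (A : lmodType Lambda) (y : T A), y = 0%R.
Proof.
move=> rex ls hyp A.
have TL : forall y : T Lambda^o, y = 0.
  apply: (hyp (fun r => r = 0) _ Lambda^o (idL Lambda^o)).
    split.
      split; first by [].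
      split; first by move=> x y -> ->; rewrite addr0.
      by move=> r x ->; rewrite mulr0.
    exists 0%N, (fun _ => 0) => x; split => [->|[c ->]].
      by exists (fun _ => 0); rewrite big_ord0.
    by rewrite big_ord0.
  by split; [move=> z; exists z | move=> r].
have TF : forall y : T (F Lambda A), y = 0.
  apply: (dlim_zero (ls _ _ _ _ _ _ (@sle_directed A) (@phiF_sys Lambda A) (@F_dlim Lambda A))).
  move=> s z; exact: TFs_zero.
have [g hg] := @gex Lambda A.
have [_ surj] := rex _ _ _ _ _ (ses_ker hg).
move=> z; have [y <-] := surj z.
by rewrite (TF y) linear0.
Qed.
Definition zC (R : pzRingType) : sclosed R^o.
Proof.
refine (@SClosed R R^o (fun r => r = 0) erefl _).
by move=> a x y -> ->; rewrite scaler0 addr0.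
Defined.
Definition Zm (R : pzRingType) := subm (zC R).

Definition psiW (R : pzRingType) (A : eqType) (s t : seq A) (h : sle s t) :
  {linear Ws R t -> Ws R s} :=
  @mkLin R _ _ (fun x : Ws R t => @SubM _ _ (fwC R s) (smv x) (fun a ha => sprop x a (h a ha)))
    (fun a x y => ltac:(by apply: subm_inj)).

Lemma W_ilim (R : pzRingType) (A : eqType) :
  is_inverse_limit (@psiW R A) (fun s => zeroL (Zm R) (Ws R s)).
Proof.
split; first by move=> s t h x /=; apply: subm_inj.
move=> M tau comp; split.
  exists (zeroL M (Zm R)) => s x /=.
  apply: esym; apply: Ws_ext => b /=.
  have hb : sle s (b :: s) by move=> z hz; rewrite inE hz orbT.
  rewrite -(comp _ _ hb x) /=.
  by rewrite (sprop (tau (b :: s) x) b (mem_head _ _)).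
move=> u v _ _ y; apply: subm_inj.
by rewrite (sprop (u y)) (sprop (v y)).
Qed.

Lemma psiW_sys (R : pzRingType) (A : eqType) : inverse_system (@psiW R A).
Proof. by split => *; apply: subm_inj. Qed.

Lemma part2 (Lambda Lambda1 : pzRingType) (T : ContraFunctor Lambda Lambda1) :
     left_exact T -> type_RSigma T ->
     (forall (I : Lambda -> Prop), left_ideal I ->
        forall (M : lmodType Lambda) (j : {linear M -> Lambda^o}),
          is_ideal_module I j -> forall y : T M, y = 0%R) ->
     forall (A : lmodType Lambda) (y : T A), y = 0%R.
Proof.
move=> lex rs hyp A.
have TL : forall y : T Lambda^o, y = 0.
  apply: (hyp (fun r => True) _ Lambda^o (idL Lambda^o)); first by [].
  by split; [move=> x y | move=> r; split => // _; exists r].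
have TZ : forall y : T (Zm Lambda), y = 0.
  apply: (hyp (fun r => r = 0) _ (Zm Lambda) (smvL (zC Lambda))).
    split; first by [].
    split; first by move=> x y -> ->; rewrite addr0.
    by move=> r x ->; rewrite mulr0.
  split; first by move=> x y /= /subm_inj.
  move=> r; split => [r0|[m <-]]; last exact: (sprop m).
  by exists (@SubM _ _ (zC Lambda) r r0).
have pid : forall (t : seq A) (w : T (F Lambda A)), kmap T (@pF Lambda A t) w = w.
  move=> t w.
  have := @kmap_add _ _ T _ _ (@pF Lambda A t) (@qF Lambda A t) (idL _) _ w.
  rewrite (kmap_id (h := idL _)) //.
  rewrite (contra_kill (d := @dF Lambda A) (e := @eF Lambda A) TL (@qF0 Lambda A) (@qFS Lambda A)) addr0.
  move=> H; apply: esym; apply: H => x.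
  apply: F_ext => b /=; rewrite fspD /=; case: ifP; by rewrite ?addr0 ?add0r.
have TF : forall y : T (F Lambda A), y = 0.
  have := rs _ _ _ _ _ _ (@sle_directed A) (@psiW_sys Lambda A) (@W_ilim Lambda A).
  move=> [_ univ].
  have comp : forall (s t : seq A) (h : sle s t) (z : T (Ws Lambda s)),
      kmap T (@rW Lambda A t) (kmap T (@psiW Lambda A s t h) z) = kmap T (@rW Lambda A s) z.
    move=> s t h z.
    rewrite -(kmap_comp (h := compL (@pF Lambda A t) (@rW Lambda A s))); last first.
      move=> x; apply: Ws_ext => b /=.
      case: (boolP (b \in s)) => [bs|//]; by rewrite (h b bs).
    by rewrite (kmap_comp (f := @pF Lambda A t) (g := @rW Lambda A s)) // pid.
  have [[u hu] _] := univ _ (fun s => kmap T (@rW Lambda A s)) comp.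
  move=> y.
  have <- : kmap T (@rW Lambda A [::]) (kmap T (smvL (fwC Lambda [::])) y) = y.
    rewrite -(kmap_comp (f := @rW Lambda A [::]) (g := smvL (fwC Lambda [::])) (h := idL _)) ?(kmap_id (h := idL _)) //.
    by move=> x; apply: F_ext.
  rewrite -(hu [::] (kmap T (smvL (fwC Lambda [::])) y)).
  by rewrite (TZ (kmap T (zeroL (Zm Lambda) (Ws Lambda [::])) _)) linear0.
have [g hg] := @gex Lambda A.
have [inj _] := lex _ _ _ _ _ (ses_ker hg).
move=> y; apply: inj.
by rewrite linear0; apply: TF.
Qed.

Theorem theorem1 (Lambda Lambda1 : pzRingType) :
  (forall T : CovFunctor Lambda Lambda1,
     right_exact T -> type_LSigma T ->
     (forall (I : Lambda -> Prop), fg_left_ideal I ->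
        forall (Q : lmodType Lambda) (p : {linear Lambda^o -> Q}),
          is_quotient_by I p -> forall y : T Q, y = 0%R) ->
     forall (A : lmodType Lambda) (y : T A), y = 0%R) /\
  (forall T : ContraFunctor Lambda Lambda1,
     left_exact T -> type_RSigma T ->
     (forall (I : Lambda -> Prop), left_ideal I ->
        forall (M : lmodType Lambda) (j : {linear M -> Lambda^o}),
          is_ideal_module I j -> forall y : T M, y = 0%R) ->
     forall (A : lmodType Lambda) (y : T A), y = 0%R).
Proof. split; [exact: part1 | exact: part2]. Qed.
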